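(* Let $T\ge 2$, $U$ a finite set of men and $W_1\subseteq W_2\subseteq\cdots\subseteq W_T$ finite sets of women, each man having a strict total order over $W_T$ and each woman a strict total order over $U$. Let $\Delta_t$ denote the set of stable matchings of $(U,W_t)$. Let $(M_1,\dots,M_T)\in\prod_{t=1}^T\Delta_t$ and let $M_1'\in\Delta_1$ be such that $M_1'$ men-dominates $M_1$. Then there exists $(M_2',\dots,M_T')\in\prod_{t=2}^T\Delta_t$ such that $\sum_{t=1}^{T-1}|M_t'\setminus M_{t+1}'|\le\sum_{t=1}^{T-1}|M_t\setminus M_{t+1}|$.
   Context: A matching is a set of man–woman pairs with each person in at most one pair; preferences in a sub-instance are restrictions of the given ones. A blocking pair of $M$ is a pair $(u,w)\notin M$ with ($u$ unmatched or preferring $w$ to his partner) and ($w$ unmatched or preferring $u$ to her partner); stable means no blocking pair. $M$ men-dominates $M'$ (both stable matchings of the same instance) if every man's partner in $M$ is at least as good for him as his partner in $M'$. *)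

(* Defs.v *)
From mathcomp Require Import all_boot.
Set Implicit Arguments. Unset Strict Implicit. Unset Printing Implicit Defensive.

Section Marriage.
Variables (U W : finType).

(* strict total order on a type, given as a boolean relation "x is preferred to y" *)
Definition strict_total_order (T : finType) (r : rel T) :=
  irreflexive r /\ transitive r /\ (forall x y, x != y -> r x y || r y x).

Definition is_matching (Wt : {set W}) (M : {set U * W}) :=
  (forall p, p \in M -> p.2 \in Wt) /\
  (forall p q, p \in M -> q \in M -> p.1 = q.1 -> p = q) /\
  (forall p q, p \in M -> q \in M -> p.2 = q.2 -> p = q).

Definition man_wants (prefM : U -> rel W) (M : {set U * W}) (u : U) (w : W) :=
  (forall w', (u, w') \notin M) \/ (exists w', (u, w') \in M /\ prefM u w w').

Definition woman_wants (prefW : W -> rel U) (M : {set U * W}) (w : W) (u : U) :=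
  (forall u', (u', w) \notin M) \/ (exists u', (u', w) \in M /\ prefW w u u').

Definition blocking_pair prefM prefW (Wt : {set W}) (M : {set U * W}) (u : U) (w : W) :=
  w \in Wt /\ (u, w) \notin M /\ man_wants prefM M u w /\ woman_wants prefW M w u.

Definition stable prefM prefW (Wt : {set W}) (M : {set U * W}) :=
  is_matching Wt M /\ forall u w, ~ blocking_pair prefM prefW Wt M u w.

(* M men-dominates M': each man's partner in M is at least as good as in M'
   (being unmatched is worst, being matched to w counts as at least as good as w) *)
Definition men_dominates (prefM : U -> rel W) (M M' : {set U * W}) :=
  forall u w', (u, w') \in M' ->
    exists w, (u, w) \in M /\ (w = w' \/ prefM u w w').

End Marriage.

(* Main.v *)
Require Import Defs.
From mathcomp Require Import all_boot.
Set Implicit Arguments. Unset Strict Implicit. Unset Printing Implicit Defensive.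

Section L.
Variables (U W : finType) (prefM : U -> rel W) (prefW : W -> rel U).
Hypothesis hpM : forall u, strict_total_order (prefM u).
Hypothesis hpW : forall w, strict_total_order (prefW w).

Lemma irrM u w : ~~ prefM u w w.
Proof. by case: (hpM u) => h _; rewrite h. Qed.
Lemma trM u a b c : prefM u a b -> prefM u b c -> prefM u a c.
Proof. case: (hpM u) => _ [h _] ?; exact: h. Qed.
Lemma totM u a b : a != b -> ~~ prefM u a b -> prefM u b a.
Proof. case: (hpM u) => _ [_ h] ne; by move: (h _ _ ne); case: (prefM u a b). Qed.
Lemma totW w a b : a != b -> ~~ prefW w a b -> prefW w b a.
Proof. case: (hpW w) => _ [_ h] ne; by move: (h _ _ ne); case: (prefW w a b). Qed.

Implicit Types (M B C A : {set U * W}) (Wt : {set W}).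

Lemma mw_notin Wt M u w : is_matching Wt M -> man_wants prefM M u w -> (u, w) \notin M.
Proof.
move=> [_ [h1 _]] [H|[w' [H1 H2]]]; first exact: H.
apply/negP=> H; have := h1 _ _ H H1 erefl; case=> e; by rewrite e (negbTE (irrM _ _)) in H2.
Qed.

Lemma neg_mw M u w : ~ man_wants prefM M u w -> exists w', (u, w') \in M /\ ~~ prefM u w w'.
Proof.
move=> Hn; case: (boolP [exists w', (u, w') \in M]) => [/existsP [w' Hw'] | /existsPn H].
- exists w'; split=> //; apply/negP=> Hp; apply: Hn; right; by exists w'.
- exfalso; apply: Hn; left; exact: H.
Qed.

Lemma neg_ww M w u : ~ woman_wants prefW M w u -> exists u', (u', w) \in M /\ ~~ prefW w u u'.
Proof.
move=> Hn; case: (boolP [exists u', (u', w) \in M]) => [/existsP [u' Hu'] | /existsPn H].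
- exists u'; split=> //; apply/negP=> Hp; apply: Hn; right; by exists u'.
- exfalso; apply: Hn; left; exact: H.
Qed.

Definition mwb M u w := [forall w', (u, w') \notin M] || [exists w', ((u, w') \in M) && prefM u w w'].

Lemma mwbP M u w : reflect (man_wants prefM M u w) (mwb M u w).
Proof.
apply: (iffP orP) => [[/forallP H|/existsP [w' /andP [H1 H2]]]|[H|[w' [H1 H2]]]].
- by left.
- by right; exists w'.
- by left; apply/forallP.
- by right; apply/existsP; exists w'; rewrite H1.
Qed.

Definition Sset B C : {set U} := [set u | [exists w, ((u, w) \in B) && mwb C u w]].

Lemma inS B C u : reflect (exists w, (u, w) \in B /\ man_wants prefM C u w) (u \in Sset B C).
Proof.
rewrite inE; apply: (iffP existsP) => [[w /andP [H1 /mwbP H2]]|[w [H1 /mwbP H2]]]; exists w => //.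
by rewrite H1.
Qed.

Section Two.
Variables (Wb Wc : {set W}) (B C : {set U * W}).
Hypothesis sB : stable prefM prefW Wb B.
Hypothesis sC : stable prefM prefW Wc C.
Hypothesis sub : Wb \subset Wc.

Lemma F2 u w : u \in Sset B C -> (u, w) \in B -> exists v, v \in Sset B C /\ (v, w) \in C.
Proof.
case: sB => [[mB1 [mB2 mB3]] nbB]; case: sC => [[mC1 [mC2 mC3]] nbC].
move=> /inS [w0 [H0 Hw0]] Hw.
have e : (u, w0) = (u, w) by apply: mB2.
case: e => e; subst w0.
have nC : (u, w) \notin C by apply: (mw_notin (conj mC1 (conj mC2 mC3))).
have wWb : w \in Wb by exact: (mB1 (u, w)).
have wWc : w \in Wc by exact: (subsetP sub).
have nww : ~ woman_wants prefW C w u.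
  by move=> Hww; apply: (nbC u w); split=> //; split=> //; split.
case: (neg_ww nww) => v [Hv Hpv].
have vu : v != u by apply/eqP=> e; subst v; rewrite Hv in nC.
have pv : prefW w v u by apply: totW => //; rewrite eq_sym.
have nB : (v, w) \notin B.
  apply/negP=> H; have := mB3 _ _ H Hw erefl; case=> e; by rewrite e eqxx in vu.
have nmw : ~ man_wants prefM B v w.
  move=> Hm; apply: (nbB v w); split=> //; split=> //; split=> //.
  by right; exists u.
case: (neg_mw nmw) => w2 [Hw2 Hp2].
have w2w : w2 != w by apply/eqP=> e; subst w2; rewrite Hw2 in nB.
have p2 : prefM v w2 w by apply: totM => //; rewrite eq_sym.
exists v; split=> //; apply/inS; exists w2; split=> //; right; by exists w.
Qed.

Lemma F1 u : u \in Sset B C -> exists w, (u, w) \in C /\ exists x, x \in Sset B C /\ (x, w) \in B.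
Proof.
case: sB => [[mB1 [mB2 mB3]] nbB]; case: sC => [[mC1 [mC2 mC3]] nbC].
move=> uS.
set S := Sset B C.
set PB := [set p in B | p.1 \in S].
set BS := [set p.2 | p in PB].
set PC := [set p in C | p.2 \in BS].
have fPB : [set p.1 | p in PB] = S.
  apply/setP=> x; apply/imsetP/idP => [[p] |xS].
    by rewrite inE => /andP [_ ?] ->.
  case/inS: (xS) => w [Hw _]; exists (x, w) => //; by rewrite inE Hw.
have cPB : #|PB| = #|S|.
  rewrite -fPB card_in_imset //; move=> p q; rewrite !inE => /andP [Hp _] /andP [Hq _] e.
  exact: mB2.
have cBS : #|BS| = #|S|.
  rewrite -cPB card_in_imset //; move=> p q; rewrite !inE => /andP [Hp _] /andP [Hq _] e.
  exact: mB3.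
have sPC : [set p.2 | p in PC] = BS.
  apply/setP=> w; apply/imsetP/idP => [[p] |wS].
    by rewrite inE => /andP [_ ?] ->.
  case/imsetP: (wS) => [[q1 q2]]; rewrite inE => /andP [Hq qS] /= ->.
  have [v [vS Hv]] := F2 qS Hq.
  exists (v, q2) => //. rewrite /PC inE Hv /=.
  by apply/imsetP; exists (q1, q2) => //; rewrite /PB inE Hq qS.
have cPC : #|[set p.1 | p in PC]| = #|S|.
  rewrite card_in_imset; last first.
    by move=> p q; rewrite !inE => /andP [Hp _] /andP [Hq _] e; exact: mC2.
  rewrite -cBS -sPC card_in_imset //.
  by move=> p q; rewrite !inE => /andP [Hp _] /andP [Hq _] e; exact: mC3.
have fsub : [set p.1 | p in PC] \subset S.
  apply/subsetP=> x /imsetP [p]; rewrite inE => /andP [Hp /imsetP [q]].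
  move: q => [q1 q2]; rewrite inE => /andP [Hq qS] /= e ->.
  have [v [vS Hv]] := F2 qS Hq.
  have : (v, q2) = p by apply: mC3.
  by move=> <-.
have eS : [set p.1 | p in PC] = S.
  by apply/eqP; rewrite eqEcard fsub cPC leqnn.
have : u \in [set p.1 | p in PC] by rewrite eS.
move=> /imsetP [[p1 p2]]; rewrite inE => /andP [Hp /imsetP [[q1 q2]]].
rewrite inE => /andP [Hq qS] /= e ->.
exists p2; split=> //.
exists q1; split=> //; by rewrite e.
Qed.


Definition Jn : {set U * W} :=
  [set p | ((p \in B) && (p.1 \in Sset B C)) || ((p \in C) && (p.1 \notin Sset B C))].

Lemma inJ p : (p \in Jn) = ((p \in B) && (p.1 \in Sset B C)) || ((p \in C) && (p.1 \notin Sset B C)).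
Proof. by rewrite inE. Qed.

Lemma J_matching : is_matching Wc Jn.
Proof.
case: sB => [[mB1 [mB2 mB3]] nbB]; case: sC => [[mC1 [mC2 mC3]] nbC].
split; [|split].
- move=> p; rewrite inJ => /orP [/andP [H _]|/andP [H _]]; last exact: mC1.
  by apply: (subsetP sub); apply: mB1.
- move=> p q; rewrite !inJ => /orP [/andP [Hp pS]|/andP [Hp pS]] /orP [/andP [Hq qS]|/andP [Hq qS]] e.
  + exact: mB2.
  + by rewrite e (negbTE qS) in pS.
  + by rewrite e qS in pS.
  + exact: mC2.
- have aux : forall p q, p \in B -> p.1 \in Sset B C -> q \in C -> q.1 \notin Sset B C -> p.2 = q.2 -> False.
    move=> [p1 p2] [q1 q2] /= Hp pS Hq qS e; subst q2.
    have [v [vS Hv]] := F2 pS Hp.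
    have : (v, p2) = (q1, p2) by apply: mC3.
    by case=> e; subst v; rewrite vS in qS.
  move=> p q; rewrite !inJ => /orP [/andP [Hp pS]|/andP [Hp pS]] /orP [/andP [Hq qS]|/andP [Hq qS]] e.
  + exact: mB3.
  + by case: (aux _ _ Hp pS Hq qS e).
  + by case: (aux _ _ Hq qS Hp pS (esym e)).
  + exact: mC3.
Qed.

Lemma mwBC u w : man_wants prefM Jn u w -> man_wants prefM B u w /\ man_wants prefM C u w.
Proof.
have [_ [mJ2 mJ3]] := J_matching.
case: sB => [[mB1 [mB2 mB3]] nbB]; case: sC => [[mC1 [mC2 mC3]] nbC].
move=> Hmw; case: (boolP (u \in Sset B C)) => uS.
- case/inS: (uS) => w0 [H0 Hw0].
  have J0 : (u, w0) \in Jn by rewrite inJ H0 uS.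
  case: Hmw => [H|[w' [H1 H2]]]; first by move: (H w0); rewrite J0.
  have : (u, w') = (u, w0) by apply: mJ2.
  case=> e; subst w'.
  split; first by right; exists w0.
  case: Hw0 => [H|[c [Hc Hpc]]]; first by left.
  by right; exists c; split=> //; apply: trM Hpc.
- case: Hmw => [H|[w' [H1 H2]]].
  + have nC : forall c, (u, c) \notin C.
      by move=> c; apply/negP=> Hc; move: (H c); rewrite inJ Hc uS orbT.
    split; last by left.
    left=> b; apply/negP=> Hb; move/negP: uS; apply; apply/inS; exists b; split=> //; by left.
  + have Hc : (u, w') \in C by move: H1; rewrite inJ (negbTE uS) andbF /= => /andP [].
    split; last by right; exists w'.
    case: (boolP [exists b, (u, b) \in B]) => [/existsP [b Hb]|/existsPn Hn]; last by left.
    right; exists b; split=> //.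
    have nmw : ~ man_wants prefM C u b.
      by move=> Hm; move/negP: uS; apply; apply/inS; exists b.
    case: (eqVneq b w') => [->|ne] //.
    have : ~~ prefM u b w' by apply/negP=> Hp; apply: nmw; right; exists w'.
    by move/(totM ne) => Hp; apply: trM Hp.
Qed.

Lemma J_stable : stable prefM prefW Wc Jn.
Proof.
have mJ := J_matching; have [_ [mJ2 mJ3]] := mJ.
case: sB => [mB nbB]; case: sC => [mC nbC].
case: (mB) => [mB1 [mB2 mB3]]; case: (mC) => [mC1 [mC2 mC3]].
split=> // u w [wW [nJ [Hmw Hww]]].
case: (mwBC Hmw) => HB HC.
case: (boolP [exists x, (x \in Sset B C) && ((x, w) \in B)]) => [/existsP [x /andP [xS Hx]]|/existsPn Hn].
- have Jx : (x, w) \in Jn by rewrite inJ Hx xS.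
  case: Hww => [H|[u' [H1 H2]]]; first by move: (H x); rewrite Jx.
  have : (u', w) = (x, w) by apply: mJ3.
  case=> e; subst u'.
  apply: (nbB u w); split; first exact: (mB1 _ Hx).
  split; first exact: (mw_notin mB).
  split=> //; right; by exists x.
- have WC : woman_wants prefW C w u.
    case: Hww => [H|[u' [H1 H2]]].
    + left=> v; apply/negP=> Hv.
      case: (boolP (v \in Sset B C)) => vS.
      * have [w1 [H1 [x [xS Hx]]]] := F1 vS.
        have : (v, w1) = (v, w) by apply: mC2.
        case=> e; subst w1; by move: (Hn x); rewrite xS Hx.
      * by move: (H v); rewrite inJ Hv vS orbT.
    + right; exists u'; split=> //.
      move: H1; rewrite inJ => /orP [/andP [Hb bS]|/andP [//]].
      by move: (Hn u'); rewrite bS Hb.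
  apply: (nbC u w); split=> //; split; first exact: (mw_notin mC).
  by split.
Qed.

Lemma J_dom : men_dominates prefM Jn C.
Proof.
case: sC => [[mC1 [mC2 mC3]] nbC].
move=> u w' Hw'; case: (boolP (u \in Sset B C)) => uS.
- case/inS: (uS) => w0 [H0 Hw0]; exists w0; split; first by rewrite inJ H0 uS.
  case: Hw0 => [H|[c [Hc Hpc]]]; first by move: (H w'); rewrite Hw'.
  have : (u, c) = (u, w') by apply: mC2.
  by case=> e; subst c; right.
- by exists w'; split; [rewrite inJ Hw' uS orbT | left].
Qed.
End Two.

Lemma countJ (Wt Wc : {set W}) (A B C : {set U * W}) :
  stable prefM prefW Wt A -> stable prefM prefW Wt B -> stable prefM prefW Wc C ->
  Wt \subset Wc -> men_dominates prefM B A ->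
  #|B :\: Jn B C| <= #|A :\: C|.
Proof.
move=> sA sB sC sub dom.
case: (sA) => [[mA1 [mA2 mA3]] _]; case: (sB) => [[mB1 [mB2 mB3]] _];
case: (sC) => [[mC1 [mC2 mC3]] _].
have e1 : #|[set p.1 | p in B :\: Jn B C]| = #|B :\: Jn B C|.
  by apply: card_in_imset => p q; rewrite !inE => /andP [_ Hp] /andP [_ Hq]; apply: mB2.
rewrite -e1; apply: leq_trans (leq_imset_card _ _); apply: subset_leq_card.
apply/subsetP=> x /imsetP [[u b]]; rewrite inE inJ => /andP [nJ Hb] /= ->.
have uS : u \notin Sset B C by apply/negP=> uS; move: nJ; rewrite Hb uS.
have nC : (u, b) \notin C by apply/negP=> Hc; move: nJ; rewrite Hc uS /= orbT.
have nmw : ~ man_wants prefM C u b by move=> Hm; move/negP: uS; apply; apply/inS; exists b.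
have [c [Hc Hpc]] := neg_mw nmw.
have cb : c != b by apply/eqP=> e; subst c; rewrite Hc in nC.
have pcb : prefM u c b by apply: totM => //; rewrite eq_sym.
have [a Ha] : exists a, (u, a) \in A.
  case: (boolP [exists a, (u, a) \in A]) => [/existsP [a Ha]|/existsPn Hn]; first by exists a.
  have uS' : u \in Sset B A by apply/inS; exists b; split=> //; left.
  have [w [Hw _]] := F1 sB sA (subxx _) uS'.
  by exists w.
have [w [Hw Hwa]] := dom _ _ Ha.
have : (u, w) = (u, b) by apply: mB2.
case=> e; subst w.
have pca : prefM u c a by case: Hwa => [<-|H] //; apply: trM H.
have nCa : (u, a) \notin C.
  apply/negP=> H; have : (u, a) = (u, c) by apply: mC2.
  by case=> e; subst a; rewrite (negbTE (irrM _ _)) in pca.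
have H : (u, a) \in A :\: C by rewrite inE nCa Ha.
exact: (imset_f (fun p : U * W => p.1) H).
Qed.

End L.

Fixpoint Mp (U W : finType) (prefM : U -> rel W) (M1' : {set U * W}) (M : nat -> {set U * W}) (n : nat) : {set U * W} :=
  match n with 0 => M1' | n'.+1 => if n' is 0 then M1' else Jn prefM (Mp prefM M1' M n') (M n) end.

Theorem lemma6 (U W : finType) (T : nat) (hT : 2 <= T)
  (Ws : nat -> {set W})
  (hnest : forall t, 1 <= t -> t < T -> Ws t \subset Ws t.+1)
  (prefM : U -> rel W) (prefW : W -> rel U)
  (hprefM : forall u, strict_total_order (prefM u))
  (hprefW : forall w, strict_total_order (prefW w))
  (M : nat -> {set U * W})
  (hM : forall t, 1 <= t <= T -> stable prefM prefW (Ws t) (M t))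
  (M1' : {set U * W})
  (hM1' : stable prefM prefW (Ws 1) M1')
  (hdom : men_dominates prefM M1' (M 1)) :
  exists M' : nat -> {set U * W},
    M' 1 = M1' /\
    (forall t, 2 <= t <= T -> stable prefM prefW (Ws t) (M' t)) /\
    \sum_(1 <= t < T) #|M' t :\: M' t.+1| <= \sum_(1 <= t < T) #|M t :\: M t.+1|.
Proof.
set Mq := Mp prefM M1' M.
have step : forall t, 1 <= t -> Mq t.+1 = Jn prefM (Mq t) (M t.+1).
  by case=> [|t] //.
have inv : forall t, 1 <= t <= T -> stable prefM prefW (Ws t) (Mq t) /\ men_dominates prefM (Mq t) (M t).
  elim=> [|t IH] //; case: t IH => [|t] IH; first by move=> _; split.
  move=> /andP [_ hle].
  have h1 : 1 <= t.+1 <= T by rewrite /= ltnW.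
  case: (IH h1) => sB dB.
  rewrite step //.
  have sub := hnest t.+1 erefl hle.
  split.
  - exact: (J_stable hprefM hprefW sB (hM _ (_ : 1 <= t.+2 <= T)) sub).
  - exact: (J_dom (Mq t.+1) (hM _ (_ : 1 <= t.+2 <= T))).
exists Mq; split=> //; split.
  by move=> t /andP [h2 h]; case: (inv t _) => //; rewrite h andbT; apply: ltnW.
rewrite big_nat_cond [X in _ <= X]big_nat_cond; apply: leq_sum => t /andP [/andP [h1 h2] _].
rewrite step //.
have ht : 1 <= t <= T by rewrite h1 ltnW.
have ht' : 1 <= t.+1 <= T by rewrite h2.
case: (inv t ht) => sB dB.
exact: (countJ hprefM hprefW (hM t ht) sB (hM _ ht') (hnest t h1 h2) dB).
Qed.
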